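(* Let $\mu>0$, $\mathbf X_0\in\mathbb R^{n\times p}$ arbitrary, and fix $r\in(0,1)$. Over the set $\Gamma\cap\{\mathbf w:\|\mathbf w\|\ge r\}$, the function $\mathbf w\mapsto\mathbf w^*\nabla^2g(\mathbf w;\mathbf X_0)\mathbf w/\|\mathbf w\|^2$ is $L$-Lipschitz with $$L\le\frac{16n^3}{\mu^2}\|\mathbf X_0\|_\infty^3+\frac{8n^{3/2}}{\mu r}\|\mathbf X_0\|_\infty^2+\frac{48n^{5/2}}{\mu}\|\mathbf X_0\|_\infty^2+96n^{5/2}\|\mathbf X_0\|_\infty.$$
   Context: $h_\mu(z)=\mu\log\cosh(z/\mu)$. For $\mathbf Y\in\mathbb R^{n\times p}$ with columns $\mathbf y_k$, $f(\mathbf q;\mathbf Y)=\frac1p\sum_k h_\mu(\mathbf q^*\mathbf y_k)$; for $\mathbf w$ in the open unit ball of $\mathbb R^{n-1}$, $\mathbf q(\mathbf w)=(\mathbf w,\sqrt{1-\|\mathbf w\|^2})$ and $g(\mathbf w;\mathbf Y)=f(\mathbf q(\mathbf w);\mathbf Y)$; $\nabla^2$ is the Hessian in $\mathbf w$. $\Gamma=\{\mathbf w\in\mathbb R^{n-1}:\|\mathbf w\|<\sqrt{(4n-1)/(4n)}\}$. $\|\mathbf X\|_\infty$ denotes the maximum absolute value of the entries of $\mathbf X$. Lipschitz is with respect to the Euclidean norm on $\mathbf w$. *)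

(* Defs.v *)
From Stdlib Require Import Reals Lra List Arith ClassicalEpsilon.
Import ListNotations.
Open Scope R_scope.

(* Vectors in R^m are functions nat -> R, only indices < m are meaningful. *)
Definition vec := nat -> R.

Definition sumR (m : nat) (f : nat -> R) : R :=
  fold_right Rplus 0 (map f (seq 0 m)).

Definition norm2 (m : nat) (w : vec) : R := sqrt (sumR m (fun i => w i * w i)).

Definition h_mu (mu z : R) : R := mu * ln (cosh (z / mu)).

Definition f_obj (mu : R) (n p : nat) (Y : nat -> nat -> R) (q : vec) : R :=
  / INR p * sumR p (fun k => h_mu mu (sumR n (fun i => q i * Y i k))).

Definition q_of (n : nat) (w : vec) : vec :=
  fun i => if (i <? n - 1)%nat then w i
           else sqrt (1 - norm2 (n - 1) w ^ 2).

Definition g_obj (mu : R) (n p : nat) (Y : nat -> nat -> R) (w : vec) : R :=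
  f_obj mu n p Y (q_of n w).

Definition deriv1 (f : R -> R) (x : R) : R :=
  epsilon (inhabits 0) (fun l => derivable_pt_lim f x l).

Definition upd (w : vec) (i : nat) (t : R) : vec :=
  fun j => if Nat.eqb j i then t else w j.

Definition partial (F : vec -> R) (i : nat) (w : vec) : R :=
  deriv1 (fun t => F (upd w i t)) (w i).

Definition hessian (F : vec -> R) (w : vec) (i j : nat) : R :=
  partial (fun v => partial F j v) i w.

Definition hess_quad (m : nat) (F : vec -> R) (w : vec) : R :=
  sumR m (fun i => sumR m (fun j => w i * hessian F w i j * w j)).

Definition max_abs (n p : nat) (X : nat -> nat -> R) : R :=
  fold_right Rmax 0
    (flat_map (fun i => map (fun k => Rabs (X i k)) (seq 0 p)) (seq 0 n)).

Definition in_Gamma (n : nat) (w : vec) : Prop :=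
  norm2 (n - 1) w < sqrt ((4 * INR n - 1) / (4 * INR n)).

(* Main.v *)
Require Import Defs.
From Stdlib Require Import Reals.
From Stdlib Require Import Reals Lra Lia Psatz List Arith ClassicalEpsilon FunctionalExtensionality.
Import ListNotations.
Open Scope R_scope.

Lemma fold_Rplus_acc l a : fold_right Rplus a l = fold_right Rplus 0 l + a.
Proof. induction l; simpl; [lra|rewrite IHl; lra]. Qed.

Lemma sumR_0 f : sumR 0 f = 0.
Proof. reflexivity. Qed.

Lemma sumR_S m f : sumR (S m) f = sumR m f + f m.
Proof.
  unfold sumR. rewrite seq_S, map_app, fold_right_app. simpl.
  rewrite fold_Rplus_acc. lra.
Qed.

Lemma sumR_ext m f g : (forall i, (i < m)%nat -> f i = g i) -> sumR m f = sumR m g.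
Proof.
  induction m; intros H; [reflexivity|]. rewrite !sumR_S, IHm, H; [reflexivity|lia|].
  intros; apply H; lia.
Qed.

Lemma sumR_plus m f g : sumR m (fun i => f i + g i) = sumR m f + sumR m g.
Proof. induction m; [rewrite !sumR_0; lra|rewrite !sumR_S, IHm; lra]. Qed.

Lemma sumR_scal m c f : sumR m (fun i => c * f i) = c * sumR m f.
Proof. induction m; [rewrite !sumR_0; lra|rewrite !sumR_S, IHm; lra]. Qed.

Lemma sumR_scalr m c f : sumR m (fun i => f i * c) = sumR m f * c.
Proof. induction m; [rewrite !sumR_0; lra|rewrite !sumR_S, IHm; lra]. Qed.

Lemma sumR_minus m f g : sumR m (fun i => f i - g i) = sumR m f - sumR m g.
Proof. induction m; [rewrite !sumR_0; lra|rewrite !sumR_S, IHm; lra]. Qed.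

Lemma sumR_swap m q F :
  sumR m (fun i => sumR q (fun j => F i j)) = sumR q (fun j => sumR m (fun i => F i j)).
Proof.
  induction m; [rewrite sumR_0; induction q; [reflexivity|rewrite sumR_S, <- IHq, sumR_0; lra]|].
  rewrite sumR_S, IHm, <- sumR_plus. apply sumR_ext; intros; rewrite sumR_S; reflexivity.
Qed.

Lemma sumR_zero m : sumR m (fun _ => 0) = 0.
Proof. induction m; [reflexivity|rewrite sumR_S, IHm; lra]. Qed.

Lemma sumR_delta m i a : (i < m)%nat -> sumR m (fun j => if Nat.eqb j i then a else 0) = a.
Proof.
  induction m; intros H; [lia|]. rewrite sumR_S.
  destruct (Nat.eq_dec i m) as [->|Hne].
  - rewrite Nat.eqb_refl. rewrite (sumR_ext _ _ (fun _ => 0)); [rewrite sumR_zero; lra|].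
    intros j Hj. destruct (Nat.eqb_spec j m); [lia|reflexivity].
  - rewrite IHm by lia. destruct (Nat.eqb_spec m i); [lia|lra].
Qed.

Lemma sumR_le m f g : (forall i, (i < m)%nat -> f i <= g i) -> sumR m f <= sumR m g.
Proof.
  induction m; intros H; [rewrite !sumR_0; lra|]. rewrite !sumR_S.
  assert (f m <= g m) by (apply H; lia).
  assert (sumR m f <= sumR m g) by (apply IHm; intros; apply H; lia). lra.
Qed.

Lemma sumR_abs m f : Rabs (sumR m f) <= sumR m (fun i => Rabs (f i)).
Proof.
  induction m; [rewrite !sumR_0, Rabs_R0; lra|]. rewrite !sumR_S.
  eapply Rle_trans; [apply Rabs_triang|]. lra.
Qed.

Lemma sumR_const m c : sumR m (fun _ => c) = INR m * c.
Proof. induction m; [rewrite sumR_0; simpl; lra|rewrite sumR_S, IHm, S_INR; lra]. Qed.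

Lemma sumR_nonneg m f : (forall i, (i < m)%nat -> 0 <= f i) -> 0 <= sumR m f.
Proof. intros H. rewrite <- (sumR_zero m). apply sumR_le. auto. Qed.

Lemma sq_nn x : 0 <= x * x.
Proof. nra. Qed.

Lemma cs_step S A B a b : 0 <= A -> 0 <= B -> S * S <= A * B ->
  (S + a * b) * (S + a * b) <= (A + a * a) * (B + b * b).
Proof.
  intros HA HB HS.
  set (x := 2 * S * (a * b)). set (Y := A * (b * b) + B * (a * a)).
  assert (Hx : x * x <= Y * Y).
  { unfold x, Y. pose proof (sq_nn (A * (b*b) - B * (a*a))).
    pose proof (sq_nn (a*b)).
    assert (S * S * ((a*b)*(a*b)) <= A * B * ((a*b)*(a*b))) by nra. nra. }
  assert (HY : 0 <= Y) by (unfold Y; nra).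
  assert (x <= Y).
  { destruct (Rle_dec x Y); auto. assert (Y * Y < x * x) by nra. lra. }
  unfold x, Y in *.
  nra.
Qed.

Lemma cauchy_schwarz m f g :
  sumR m (fun i => f i * g i) * sumR m (fun i => f i * g i)
  <= sumR m (fun i => f i * f i) * sumR m (fun i => g i * g i).
Proof.
  induction m; [rewrite !sumR_0; lra|]. rewrite !sumR_S.
  apply cs_step; auto; apply sumR_nonneg; intros; nra.
Qed.

Lemma derivable_sumR m (F : nat -> R -> R) F' x :
  (forall i, (i < m)%nat -> derivable_pt_lim (F i) x (F' i)) ->
  derivable_pt_lim (fun t => sumR m (fun i => F i t)) x (sumR m F').
Proof.
  induction m; intros H.
  - rewrite sumR_0. apply (derivable_pt_lim_const 0).
  - rewrite sumR_S. 
    apply (derivable_pt_lim_ext (fun t => sumR m (fun i => F i t) + F m t)).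
    { intros; rewrite sumR_S; reflexivity. }
    apply (derivable_pt_lim_plus (fun t => sumR m (fun i => F i t)) (F m)); [apply IHm|apply H]; auto.
Qed.


Definition Nsq m (v : vec) := sumR m (fun i => v i * v i).
Definition sv m v := sqrt (1 - Nsq m v).
Definition Zk n (X : nat -> nat -> R) k v :=
  sumR (n-1) (fun i => v i * X i k) + sv (n-1) v * X (n-1)%nat k.
Definition th x := sinh x / cosh x.
Definition Gf mu n p X v := / INR p * sumR p (fun k => h_mu mu (Zk n X k v)).

Lemma Nsq_nonneg m v : 0 <= Nsq m v.
Proof. apply sumR_nonneg; intros; apply sq_nn. Qed.

Lemma norm2_sq m v : norm2 m v ^ 2 = Nsq m v.
Proof. unfold norm2. simpl. rewrite Rmult_1_r, sqrt_sqrt; [reflexivity|apply Nsq_nonneg]. Qed.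

Lemma g_eq mu n p X : (1 <= n)%nat -> g_obj mu n p X = Gf mu n p X.
Proof.
  intros Hn. apply functional_extensionality; intros v.
  unfold g_obj, Gf, f_obj. f_equal. apply sumR_ext; intros k _. f_equal.
  unfold Zk. replace n with (S (n-1)) at 1 by lia. rewrite sumR_S. f_equal.
  - apply sumR_ext; intros i Hi. unfold q_of.
    destruct (Nat.ltb_spec i (n-1)); [reflexivity|lia].
  - unfold q_of. destruct (Nat.ltb_spec (n-1) (n-1)); [lia|]. rewrite norm2_sq. reflexivity.
Qed.

Lemma deriv1_eq f x l : derivable_pt_lim f x l -> deriv1 f x = l.
Proof.
  intros H. unfold deriv1. apply (uniqueness_limite f x).
  - apply (epsilon_spec (inhabits 0) (fun l => derivable_pt_lim f x l)). exists l; exact H.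
  - exact H.
Qed.

Lemma derivable_loc_ext f g x l d : 0 < d -> (forall t, Rabs (t - x) < d -> f t = g t) ->
  derivable_pt_lim g x l -> derivable_pt_lim f x l.
Proof.
  intros Hd Heq Hg eps Heps. destruct (Hg eps Heps) as [del Hdel].
  assert (Hm : 0 < Rmin del d) by (apply Rmin_pos; [apply cond_pos|lra]).
  exists (mkposreal _ Hm). intros h Hh Hhd. simpl in Hhd.
  rewrite !Heq.
  - apply Hdel; auto. eapply Rlt_le_trans; [exact Hhd|apply Rmin_l].
  - unfold Rminus; rewrite Rplus_opp_r, Rabs_R0; lra.
  - replace (x + h - x) with h by ring. eapply Rlt_le_trans; [exact Hhd|apply Rmin_r].
Qed.

Lemma cosh_pos x : 0 < cosh x.
Proof. unfold cosh. pose proof (exp_pos x). pose proof (exp_pos (-x)). lra. Qed.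

Lemma cosh_sinh x : cosh x * cosh x - sinh x * sinh x = 1.
Proof.
  unfold cosh, sinh. pose proof (exp_plus x (-x)). rewrite Rplus_opp_r, exp_0 in H. nra.
Qed.

Lemma th_bound x : -1 < th x < 1.
Proof.
  unfold th. pose proof (cosh_pos x).
  assert (Hs : - cosh x < sinh x < cosh x).
  { unfold cosh, sinh in *. pose proof (exp_pos x). pose proof (exp_pos (-x)). lra. }
  assert (Hi : 0 < / cosh x) by (apply Rinv_0_lt_compat; auto).
  assert (Hc : cosh x * / cosh x = 1) by (field; lra).
  unfold Rdiv. split; nra.
Qed.

Lemma derivable_th x : derivable_pt_lim th x (1 - th x ^ 2).
Proof.
  pose proof (cosh_pos x).
  replace (1 - th x ^ 2) with ((cosh x * cosh x - sinh x * sinh x) / (cosh x)²).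
  - apply (derivable_pt_lim_div sinh cosh); [apply derivable_pt_lim_sinh|apply derivable_pt_lim_cosh|lra].
  - unfold th, Rsqr. field. lra.
Qed.

Lemma derivable_h mu z : 0 < mu -> derivable_pt_lim (h_mu mu) z (th (z / mu)).
Proof.
  intros Hmu. unfold h_mu.
  pose proof (cosh_pos (z/mu)).
  replace (th (z/mu)) with (mu * (/ cosh (z/mu) * (sinh (z/mu) * (1 / mu)))).
  2:{ unfold th. field. lra. }
  apply (derivable_pt_lim_scal (fun z => ln (cosh (z / mu)))).
  apply (derivable_pt_lim_comp (fun z => cosh (z / mu)) ln).
  - apply (derivable_pt_lim_comp (fun z => z / mu) cosh).
    + apply (derivable_pt_lim_div_scal id). apply derivable_pt_lim_id.
    + apply derivable_pt_lim_cosh.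
  - apply derivable_pt_lim_ln; auto.
Qed.

Lemma derivable_thc mu z dz f : 0 < mu -> derivable_pt_lim f z dz ->
  derivable_pt_lim (fun t => th (f t / mu)) z ((1 - th (f z / mu) ^ 2) * (dz / mu)).
Proof.
  intros Hmu Hf.
  apply (derivable_pt_lim_comp (fun t => f t / mu) th).
  - apply (derivable_pt_lim_div_scal f); auto.
  - apply derivable_th.
Qed.

Lemma d_coord w i j t0 :
  derivable_pt_lim (fun t => upd w i t j) t0 (if Nat.eqb j i then 1 else 0).
Proof.
  unfold upd. destruct (Nat.eqb j i).
  - apply derivable_pt_lim_id.
  - apply derivable_pt_lim_const.
Qed.

Lemma upd_same w i t : upd w i t i = t.
Proof. unfold upd. rewrite Nat.eqb_refl. reflexivity. Qed.

Lemma upd_id w i : upd w i (w i) = w.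
Proof. apply functional_extensionality; intros j. unfold upd. destruct (Nat.eqb_spec j i); subst; auto. Qed.

Lemma d_Nsq m w i t0 : (i < m)%nat ->
  derivable_pt_lim (fun t => Nsq m (upd w i t)) t0 (2 * t0).
Proof.
  intros Hi. unfold Nsq.
  rewrite <- (sumR_delta m i (2 * t0)) by auto.
  apply (derivable_sumR m (fun l t => upd w i t l * upd w i t l)). intros l Hl.
  replace (if Nat.eqb l i then 2 * t0 else 0) with
    ((if Nat.eqb l i then 1 else 0) * upd w i t0 l + upd w i t0 l * (if Nat.eqb l i then 1 else 0)).
  - apply (derivable_pt_lim_mult (fun t => upd w i t l) (fun t => upd w i t l)); apply d_coord.
  - unfold upd. destruct (Nat.eqb l i); ring.
Qed.

Lemma sv_pos m v : Nsq m v < 1 -> 0 < sv m v.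
Proof. intros; unfold sv; apply sqrt_lt_R0; lra. Qed.

Lemma sv_sq m v : Nsq m v < 1 -> sv m v * sv m v = 1 - Nsq m v.
Proof. intros; unfold sv; apply sqrt_sqrt; lra. Qed.

Lemma d_sv m w i t0 : (i < m)%nat -> Nsq m (upd w i t0) < 1 ->
  derivable_pt_lim (fun t => sv m (upd w i t)) t0 (- t0 / sv m (upd w i t0)).
Proof.
  intros Hi HN. pose proof (sv_pos _ _ HN).
  replace (- t0 / sv m (upd w i t0)) with (/ (2 * sqrt (1 - Nsq m (upd w i t0))) * (0 - 2 * t0)).
  2:{ unfold sv in *. field. lra. }
  apply (derivable_pt_lim_comp (fun t => 1 - Nsq m (upd w i t)) sqrt).
  - apply (derivable_pt_lim_minus (fun _ => 1) (fun t => Nsq m (upd w i t))).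
    + apply derivable_pt_lim_const.
    + apply d_Nsq; auto.
  - apply derivable_pt_lim_sqrt. lra.
Qed.

Lemma d_Zk n X k w i t0 : (i < n-1)%nat -> Nsq (n-1) (upd w i t0) < 1 ->
  derivable_pt_lim (fun t => Zk n X k (upd w i t)) t0
    (X i k - t0 * X (n-1)%nat k / sv (n-1) (upd w i t0)).
Proof.
  intros Hi HN. pose proof (sv_pos _ _ HN). unfold Zk.
  replace (X i k - t0 * X (n-1)%nat k / sv (n-1) (upd w i t0)) with
    (sumR (n-1) (fun l => (if Nat.eqb l i then 1 else 0) * X l k) + (- t0 / sv (n-1) (upd w i t0)) * X (n-1)%nat k).
  2:{ rewrite (sumR_ext _ _ (fun l => if Nat.eqb l i then X i k else 0)).
      - rewrite sumR_delta by auto. field. lra.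
      - intros l _. destruct (Nat.eqb_spec l i); subst; ring. }
  apply (derivable_pt_lim_plus (fun t => sumR (n-1) (fun l => upd w i t l * X l k))
           (fun t => sv (n-1) (upd w i t) * X (n-1)%nat k)).
  - apply (derivable_sumR (n-1) (fun l t => upd w i t l * X l k)). intros l Hl.
    apply (derivable_pt_lim_scal_right (fun t => upd w i t l)). apply d_coord.
  - apply (derivable_pt_lim_scal_right (fun t => sv (n-1) (upd w i t))). apply d_sv; auto.
Qed.


Definition Dj mu n p (X : nat -> nat -> R) j v :=
  / INR p * sumR p (fun k => th (Zk n X k v / mu) * (X j k - v j / sv (n-1) v * X (n-1)%nat k)).

Definition Hij mu n p (X : nat -> nat -> R) i j v :=
  / INR p * sumR p (fun k =>
    (1 - th (Zk n X k v / mu) ^ 2) * ((X i k - v i * X (n-1)%nat k / sv (n-1) v) / mu)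
      * (X j k - v j / sv (n-1) v * X (n-1)%nat k)
    + th (Zk n X k v / mu) *
      (0 - ((if Nat.eqb j i then 1 else 0) * sv (n-1) v - (- v i / sv (n-1) v) * v j)
             / (sv (n-1) v)² * X (n-1)%nat k)).

Lemma d_G mu n p X w i t0 : 0 < mu -> (i < n-1)%nat -> Nsq (n-1) (upd w i t0) < 1 ->
  derivable_pt_lim (fun t => Gf mu n p X (upd w i t)) t0 (Dj mu n p X i (upd w i t0)).
Proof.
  intros Hmu Hi HN. unfold Gf, Dj.
  apply (derivable_pt_lim_scal (fun t => sumR p (fun k => h_mu mu (Zk n X k (upd w i t))))).
  apply (derivable_sumR p (fun k t => h_mu mu (Zk n X k (upd w i t)))). intros k Hk.
  rewrite upd_same.
  replace (t0 / sv (n - 1) (upd w i t0) * X (n - 1)%nat k) with (t0 * X (n - 1)%nat k / sv (n - 1) (upd w i t0)) by (unfold Rdiv; ring).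
  apply (derivable_pt_lim_comp (fun t => Zk n X k (upd w i t)) (h_mu mu)).
  - apply d_Zk; auto.
  - apply derivable_h; auto.
Qed.

Lemma partial_G mu n p X j v : 0 < mu -> (j < n-1)%nat -> Nsq (n-1) v < 1 ->
  partial (Gf mu n p X) j v = Dj mu n p X j v.
Proof.
  intros Hmu Hj HN. unfold partial. apply deriv1_eq.
  pose proof (d_G mu n p X v j (v j) Hmu Hj). rewrite upd_id in H. auto.
Qed.

Lemma d_D mu n p X w i j t0 : 0 < mu -> (i < n-1)%nat -> (j < n-1)%nat -> Nsq (n-1) (upd w i t0) < 1 ->
  derivable_pt_lim (fun t => Dj mu n p X j (upd w i t)) t0 (Hij mu n p X i j (upd w i t0)).
Proof.
  intros Hmu Hi Hj HN. pose proof (sv_pos _ _ HN). unfold Dj, Hij.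
  apply (derivable_pt_lim_scal (fun t => sumR p (fun k => th (Zk n X k (upd w i t) / mu) *
     (X j k - upd w i t j / sv (n-1) (upd w i t) * X (n-1)%nat k)))).
  apply (derivable_sumR p (fun k t => th (Zk n X k (upd w i t) / mu) *
     (X j k - upd w i t j / sv (n-1) (upd w i t) * X (n-1)%nat k))). intros k Hk.
  rewrite upd_same.
  apply (derivable_pt_lim_mult (fun t => th (Zk n X k (upd w i t) / mu))
     (fun t => X j k - upd w i t j / sv (n-1) (upd w i t) * X (n-1)%nat k)).
  - apply (derivable_thc mu t0 _ (fun t => Zk n X k (upd w i t))); auto. apply d_Zk; auto.
  - apply (derivable_pt_lim_minus (fun _ => X j k) (fun t => upd w i t j / sv (n-1) (upd w i t) * X (n-1)%nat k)).
    + apply derivable_pt_lim_const.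
    + apply (derivable_pt_lim_scal_right (fun t => upd w i t j / sv (n-1) (upd w i t))).
      apply (derivable_pt_lim_div (fun t => upd w i t j) (fun t => sv (n-1) (upd w i t))).
      * apply d_coord.
      * apply d_sv; auto.
      * lra.
Qed.

Lemma Nsq_upd m w i t : (i < m)%nat -> Nsq m (upd w i t) = Nsq m w + (t * t - w i * w i).
Proof.
  intros Hi. rewrite <- (sumR_delta m i (t * t - w i * w i)) by auto.
  unfold Nsq. rewrite <- sumR_plus. apply sumR_ext; intros l _.
  unfold upd. destruct (Nat.eqb_spec l i); subst; ring.
Qed.

Lemma hess_G mu n p X w i j : 0 < mu -> (i < n-1)%nat -> (j < n-1)%nat -> Nsq (n-1) w < 1 ->
  hessian (Gf mu n p X) w i j = Hij mu n p X i j w.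
Proof.
  intros Hmu Hi Hj HN. unfold hessian, partial at 1. apply deriv1_eq.
  set (e := 1 - Nsq (n-1) w). set (a := Rabs (w i)).
  assert (He : 0 < e) by (unfold e; lra).
  assert (Ha : 0 <= a) by apply Rabs_pos.
  set (d := Rmin 1 (e / (2 * a + 2))).
  assert (Hd : 0 < d) by (apply Rmin_pos; [lra|apply Rdiv_lt_0_compat; lra]).
  assert (Hnb : forall t, Rabs (t - w i) < d -> Nsq (n-1) (upd w i t) < 1).
  { intros t Ht. rewrite Nsq_upd by auto.
    assert (Hd1 : d <= 1) by apply Rmin_l.
    assert (Hd2 : d * (2 * a + 2) <= e).
    { assert (d <= e / (2 * a + 2)) by apply Rmin_r.
      apply (Rmult_le_compat_r (2 * a + 2)) in H; [|lra].
      unfold Rdiv in H. rewrite Rmult_assoc, Rinv_l, Rmult_1_r in H; lra. }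
    assert (Hta : Rabs (t + w i) <= 2 * a + 1).
    { replace (t + w i) with ((t - w i) + 2 * w i) by ring.
      eapply Rle_trans; [apply Rabs_triang|]. rewrite Rabs_mult, (Rabs_right 2) by lra. unfold a. lra. }
    assert (Rabs (t * t - w i * w i) < e).
    { replace (t * t - w i * w i) with ((t - w i) * (t + w i)) by ring.
      rewrite Rabs_mult. pose proof (Rabs_pos (t + w i)). pose proof (Rabs_pos (t - w i)).
      apply Rle_lt_trans with (d * (2 * a + 1)); [|assert (d*(2*a+1) = d*(2*a+2) - d) by ring; lra].
      apply Rmult_le_compat; lra. }
    pose proof (Rle_abs (t * t - w i * w i)). unfold e in *. lra. }
  apply (derivable_loc_ext _ (fun t => Dj mu n p X j (upd w i t)) _ _ d Hd).
  - intros t Ht. apply partial_G; auto.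
  - pose proof (d_D mu n p X w i j (w i) Hmu Hi Hj). rewrite upd_id in H. apply H. auto.
Qed.


Definition Ck n (X : nat -> nat -> R) k w :=
  sumR (n-1) (fun i => w i * X i k) / norm2 (n-1) w - norm2 (n-1) w * X (n-1)%nat k / sv (n-1) w.

Definition Tk mu n (X : nat -> nat -> R) k w :=
  (1 - th (Zk n X k w / mu) ^ 2) / mu * Ck n X k w ^ 2
  - th (Zk n X k w / mu) * X (n-1)%nat k / sv (n-1) w ^ 3.

Definition Phi mu n p X w := / INR p * sumR p (fun k => Tk mu n X k w).

Lemma quad_k m (w P : vec) c1 c2 c3 :
  sumR m (fun i => sumR m (fun j =>
     (w i * c1 * P i) * (w j * P j) - c2 * (if Nat.eqb j i then w i * w i else 0)
     - (c3 * w i * w i) * (w j * w j)))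
  = c1 * sumR m (fun i => w i * P i) * sumR m (fun i => w i * P i) - c2 * Nsq m w - c3 * Nsq m w * Nsq m w.
Proof.
  rewrite (sumR_ext m _ (fun i => (w i * c1 * P i) * sumR m (fun j => w j * P j) - c2 * (w i * w i)
        - (c3 * w i * w i) * Nsq m w)).
  - rewrite !sumR_minus. rewrite sumR_scalr, sumR_scal, sumR_scalr.
    rewrite (sumR_ext m (fun i => w i * c1 * P i) (fun i => c1 * (w i * P i))) by (intros; ring).
    rewrite (sumR_ext m (fun i => c3 * w i * w i) (fun i => c3 * (w i * w i))) by (intros; ring).
    rewrite !sumR_scal. unfold Nsq. ring.
  - intros i Hi. rewrite !sumR_minus, sumR_scal, sumR_scal, sumR_scal, sumR_delta by auto.
    unfold Nsq. ring.
Qed.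

Lemma hess_formula mu n p X w : 0 < mu -> (2 <= n)%nat -> 0 < Nsq (n-1) w -> Nsq (n-1) w < 1 ->
  hess_quad (n-1) (g_obj mu n p X) w / norm2 (n-1) w ^ 2 = Phi mu n p X w.
Proof.
  intros Hmu Hn HN0 HN1. rewrite g_eq by lia. unfold hess_quad.
  set (m := (n-1)%nat) in *.
  pose proof (sv_pos _ _ HN1) as Hs. pose proof (sv_sq _ _ HN1) as Hs2.
  rewrite (sumR_ext m _ (fun i => / INR p * sumR m (fun j => sumR p (fun k => w i * w j *
     ((1 - th (Zk n X k w / mu) ^ 2) * ((X i k - w i * X m k / sv m w) / mu)
      * (X j k - w j / sv m w * X m k)
    + th (Zk n X k w / mu) *
      (0 - ((if Nat.eqb j i then 1 else 0) * sv m w - (- w i / sv m w) * w j)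
             / (sv m w)² * X m k)))))).
  2:{ intros i Hi. rewrite <- sumR_scal. apply sumR_ext; intros j Hj.
      rewrite hess_G by (auto; lia). unfold Hij. fold m. rewrite <- !sumR_scal. rewrite <- (sumR_scalr p (w j)). apply sumR_ext; intros k _. ring.
      }
  rewrite sumR_scal.
  rewrite (sumR_ext m _ (fun i => sumR p (fun k => sumR m (fun j => w i * w j *
     ((1 - th (Zk n X k w / mu) ^ 2) * ((X i k - w i * X m k / sv m w) / mu)
      * (X j k - w j / sv m w * X m k)
    + th (Zk n X k w / mu) *
      (0 - ((if Nat.eqb j i then 1 else 0) * sv m w - (- w i / sv m w) * w j)
             / (sv m w)² * X m k)))))).
  2:{ intros i _. apply sumR_swap. }
  rewrite sumR_swap. unfold Phi. unfold Rdiv at 1. rewrite Rmult_assoc. f_equal.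
  rewrite <- sumR_scalr. apply sumR_ext; intros k _.
  set (A := 1 - th (Zk n X k w / mu) ^ 2). set (B := th (Zk n X k w / mu)).
  set (s := sv m w).
  rewrite (sumR_ext m _ (fun i => sumR m (fun j =>
     (w i * (A / mu) * (X i k - w i * X m k / s)) * (w j * (X j k - w j * X m k / s))
     - (B * X m k / s) * (if Nat.eqb j i then w i * w i else 0)
     - (B * X m k / s ^ 3 * w i * w i) * (w j * w j)))).
  2:{ intros i _. apply sumR_ext; intros j _. destruct (Nat.eqb_spec j i).
      - subst j. unfold Rsqr. field; unfold s; split; lra.
      - unfold Rsqr. field; unfold s; split; lra. }
  rewrite quad_k.
  unfold Tk, Ck. fold m. fold s. fold A. fold B.
  rewrite norm2_sq.
  assert (Hr : norm2 m w * norm2 m w = Nsq m w).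
  { rewrite <- norm2_sq. ring. }
  assert (Hrp : 0 < norm2 m w).
  { unfold norm2. apply sqrt_lt_R0. auto. }
  rewrite (sumR_ext m (fun i => w i * (X i k - w i * X m k / s))
             (fun i => w i * X i k - (w i * w i) * (X m k / s))) by (intros; unfold s; field; lra).
  rewrite sumR_minus, sumR_scalr. fold (Nsq m w).
  rewrite <- Hr. fold s in Hs2. rewrite <- Hr in Hs2.
  set (r := norm2 m w) in *. set (S := sumR m (fun i => w i * X i k)). set (xm := X m k).
  assert (Hsp : 0 < s) by (unfold s; auto).
  assert (E : B*xm/s*(r*r) + B*xm/s^3*(r*r)*(r*r) = B*xm/s^3*(r*r)).
  { assert (Hsr : s*s + r*r = 1) by lra.
    transitivity (B*xm*(r*r)*(s*s + r*r)/s^3); [field; lra|rewrite Hsr; field; lra]. }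
  match goal with |- (?a - ?b - ?c) * _ = _ => replace (a - b - c) with (a - (b + c)) by ring end.
  rewrite E. field. split; lra.
Qed.


Lemma fold_max_ge l x : In x l -> x <= fold_right Rmax 0 l.
Proof.
  induction l; simpl; [tauto|]. intros [->|H].
  - apply Rmax_l.
  - eapply Rle_trans; [apply IHl; auto|apply Rmax_r].
Qed.

Lemma fold_max_nonneg l : 0 <= fold_right Rmax 0 l.
Proof. induction l; simpl; [lra|eapply Rle_trans; [exact IHl|apply Rmax_r]]. Qed.

Lemma max_abs_ge n p X i k : (i < n)%nat -> (k < p)%nat -> Rabs (X i k) <= max_abs n p X.
Proof.
  intros Hi Hk. unfold max_abs. apply fold_max_ge.
  apply in_flat_map. exists i. split; [apply in_seq; lia|].
  apply in_map_iff. exists k. split; [reflexivity|apply in_seq; lia].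
Qed.

Lemma max_abs_nonneg n p X : 0 <= max_abs n p X.
Proof. apply fold_max_nonneg. Qed.

Lemma th_lip x y : Rabs (th x - th y) <= Rabs (x - y).
Proof.
  destruct (MVT_abs th (fun c => 1 - th c ^ 2) y x) as [c [Hc _]].
  { intros; apply derivable_th. }
  rewrite Hc. pose proof (th_bound c).
  assert (Rabs (1 - th c ^ 2) <= 1) by (apply Rabs_le; nra).
  pose proof (Rabs_pos (x - y)). nra.
Qed.

Lemma th2_lip x y : Rabs (th x ^ 2 - th y ^ 2) <= Rabs (x - y).
Proof.
  destruct (MVT_abs (fun z => th z ^ 2) (fun c => 2 * th c * (1 - th c ^ 2)) y x) as [c [Hc _]].
  { intros c _. replace (2 * th c * (1 - th c ^ 2)) with ((1 - th c ^ 2) * th c + th c * (1 - th c ^ 2)) by ring.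
    apply (derivable_pt_lim_ext (fun z => th z * th z)); [intros; ring|].
    apply derivable_pt_lim_mult; apply derivable_th. }
  rewrite Hc. pose proof (th_bound c). set (u := th c) in *.
  assert (Rabs (2 * u * (1 - u ^ 2)) <= 1).
  { apply Rabs_le. split.
    - assert (0 <= 2 * (1 - u) * (u + 1/2) * (u + 1/2) + 0.5 * (1 + u)).
      { pose proof (sq_nn (u + 1/2)). nra. }
      nra.
    - assert (0 <= 2 * (u + 1) * (u - 1/2) * (u - 1/2) + 0.5 * (1 - u)).
      { pose proof (sq_nn (u - 1/2)). nra. }
      nra. }
  pose proof (Rabs_pos (x - y)). nra.
Qed.

Lemma abs_le_sq a b : 0 <= b -> a * a <= b * b -> Rabs a <= b.
Proof.
  intros Hb H. destruct (Rle_dec (Rabs a) b); auto.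
  assert (b < Rabs a) by lra. pose proof (Rabs_pos a).
  assert (Rabs a * Rabs a = a * a) by (rewrite <- Rabs_mult; apply Rabs_right; apply Rle_ge; apply sq_nn).
  nra.
Qed.

Lemma sqrt_sq_le a b : 0 <= a -> 0 <= b -> a <= b * b -> sqrt a <= b.
Proof.
  intros Ha Hb H. rewrite <- (sqrt_square b) by auto. apply sqrt_le_1_alt. auto.
Qed.

Lemma dot_bound n p X k (v : vec) : (k < p)%nat ->
  Rabs (sumR (n-1) (fun i => v i * X i k))
  <= norm2 (n-1) v * (sqrt (INR (n-1)) * max_abs n p X).
Proof.
  intros Hk. set (M := max_abs n p X). pose proof (max_abs_nonneg n p X).
  apply abs_le_sq.
  - apply Rmult_le_pos; [apply sqrt_pos|apply Rmult_le_pos; [apply sqrt_pos|auto]].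
  - eapply Rle_trans; [apply cauchy_schwarz|].
    assert (HX : sumR (n-1) (fun i => X i k * X i k) <= INR (n-1) * (M * M)).
    { rewrite <- sumR_const. apply sumR_le. intros i Hi.
      pose proof (max_abs_ge n p X i k ltac:(lia) Hk). fold M in H0.
      pose proof (Rabs_pos (X i k)).
      assert (X i k * X i k = Rabs (X i k) * Rabs (X i k)) by (unfold Rabs; destruct (Rcase_abs (X i k)); ring).
      nra. }
    replace (norm2 (n - 1) v * (sqrt (INR (n - 1)) * M) * (norm2 (n - 1) v * (sqrt (INR (n - 1)) * M)))
      with ((norm2 (n-1) v ^ 2) * ((sqrt (INR (n-1)) * sqrt (INR (n-1))) * (M * M))) by ring.
    rewrite norm2_sq, sqrt_sqrt by apply pos_INR.
    apply Rmult_le_compat_l; [apply Nsq_nonneg|auto].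
Qed.


Lemma abs_sq_eq x : Rabs x * Rabs x = x * x.
Proof. unfold Rabs; destruct (Rcase_abs x); ring. Qed.

Lemma G1 a d r1 r2 s1 s2 : 0 < s1 -> 0 < s2 -> 0 <= r1 < 1 -> 0 <= r2 < 1 ->
  1 < a * s1 -> 1 < a * s2 -> s1 * s1 + r1 * r1 = 1 -> s2 * s2 + r2 * r2 = 1 ->
  Rabs (r1 - r2) <= d -> Rabs (s1 - s2) <= a * d.
Proof.
  intros. assert (E : Rabs (s1 - s2) * (s1 + s2) = Rabs (r1 - r2) * (r1 + r2)).
  { rewrite <- (Rabs_right (s1 + s2)) by lra. rewrite <- (Rabs_right (r1 + r2)) by lra.
    rewrite <- !Rabs_mult. rewrite <- Rabs_Ropp. f_equal. nra. }
  pose proof (Rabs_pos (r1 - r2)).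
  assert (Rabs (s1 - s2) * (s1 + s2) <= a * d * (s1 + s2)).
  { rewrite E. assert (0 <= d) by (pose proof (Rabs_pos (r1 - r2)); lra).
    apply Rle_trans with (d * (r1 + r2)); [apply Rmult_le_compat_r; lra|]. nra. }
  apply (Rmult_le_reg_r (s1 + s2)); lra.
Qed.

Lemma G2 a d r1 r2 s1 s2 : 0 < s1 -> 0 < s2 -> 0 < r1 < 1 -> 0 < r2 < 1 ->
  1 < a * s1 -> 1 < a * s2 -> s1 * s1 + r1 * r1 = 1 -> s2 * s2 + r2 * r2 = 1 ->
  Rabs (r1 - r2) <= d -> Rabs (r1 / s1 - r2 / s2) <= a ^ 3 * d.
Proof.
  intros. set (q := r1 * s2 - r2 * s1).
  assert (Hw : 0 < r1 * s2 + r2 * s1) by nra.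
  assert (E : Rabs q * (r1 * s2 + r2 * s1) = Rabs (r1 - r2) * (r1 + r2)).
  { rewrite <- (Rabs_right (r1 * s2 + r2 * s1)) by lra. rewrite <- (Rabs_right (r1 + r2)) by lra.
    rewrite <- !Rabs_mult. f_equal. unfold q. nra. }
  assert (0 <= d) by (pose proof (Rabs_pos (r1 - r2)); lra).
  assert (Hq : Rabs q <= a * d).
  { apply (Rmult_le_reg_r (r1 * s2 + r2 * s1)); auto. rewrite E.
    apply Rle_trans with (d * (r1 + r2)); [apply Rmult_le_compat_r; lra|].
    assert (r1 * 1 <= r1 * (a * s2)) by (apply Rmult_le_compat_l; lra).
    assert (r2 * 1 <= r2 * (a * s1)) by (apply Rmult_le_compat_l; lra).
    assert (r1 + r2 <= a * (r1 * s2 + r2 * s1)) by nra.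
    replace (a * d * (r1 * s2 + r2 * s1)) with (d * (a * (r1 * s2 + r2 * s1))) by ring.
    apply Rmult_le_compat_l; lra. }
  replace (r1 / s1 - r2 / s2) with (q * (/ s1 * / s2)) by (unfold q; field; lra).
  rewrite Rabs_mult, (Rabs_right (/ s1 * / s2)).
  2:{ apply Rle_ge, Rmult_le_pos; left; apply Rinv_0_lt_compat; auto. }
  assert (0 < / s1 < a) by (split; [apply Rinv_0_lt_compat; auto|apply (Rmult_lt_reg_r s1); auto; rewrite Rinv_l; lra]).
  assert (0 < / s2 < a) by (split; [apply Rinv_0_lt_compat; auto|apply (Rmult_lt_reg_r s2); auto; rewrite Rinv_l; lra]).
  pose proof (Rabs_pos q).
  assert (/ s1 * / s2 <= a * a) by nra.
  replace (a ^ 3 * d) with ((a * d) * (a * a)) by ring.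
  apply Rmult_le_compat; auto. apply Rmult_le_pos; lra.
Qed.

Lemma G3 a d s1 s2 : 0 < s1 -> 0 < s2 -> 1 < a * s1 -> 1 < a * s2 ->
  Rabs (s1 - s2) <= a * d -> Rabs (/ s1 ^ 3 - / s2 ^ 3) <= 3 * a ^ 5 * d.
Proof.
  intros. set (i1 := / s1). set (i2 := / s2).
  assert (0 < i1 < a) by (split; [apply Rinv_0_lt_compat; auto|apply (Rmult_lt_reg_r s1); auto; unfold i1; rewrite Rinv_l; lra]).
  assert (0 < i2 < a) by (split; [apply Rinv_0_lt_compat; auto|apply (Rmult_lt_reg_r s2); auto; unfold i2; rewrite Rinv_l; lra]).
  replace (/ s1 ^ 3 - / s2 ^ 3) with ((s2 - s1) * (i1 * i2 * (i1 * i1 + i1 * i2 + i2 * i2)))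
    by (unfold i1, i2; field; lra).
  rewrite Rabs_mult, (Rabs_minus_sym s2 s1).
  assert (0 < i1 * i1) by (apply Rmult_lt_0_compat; lra).
  assert (0 < i1 * i2) by (apply Rmult_lt_0_compat; lra).
  assert (0 < i2 * i2) by (apply Rmult_lt_0_compat; lra).
  rewrite (Rabs_right (i1 * i2 * _)) by (apply Rle_ge, Rmult_le_pos; lra).
  assert (i1 * i2 * (i1 * i1 + i1 * i2 + i2 * i2) <= 3 * a ^ 4).
  { assert (i1 * i2 <= a * a) by nra.
    assert (i1 * i1 + i1 * i2 + i2 * i2 <= 3 * (a * a)) by nra.
    replace (3 * a ^ 4) with ((a * a) * (3 * (a * a))) by ring.
    apply Rmult_le_compat; nra. }
  pose proof (Rabs_pos (s1 - s2)).
  replace (3 * a ^ 5 * d) with ((a * d) * (3 * a ^ 4)) by ring.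
  apply Rmult_le_compat; auto. nra.
Qed.


Definition dot m (w1 w2 : vec) := sumR m (fun i => w1 i * w2 i).

Lemma norm2_nonneg m w : 0 <= norm2 m w.
Proof. apply sqrt_pos. Qed.

Lemma norm2_sq' m w : norm2 m w * norm2 m w = Nsq m w.
Proof. rewrite <- norm2_sq. ring. Qed.

Lemma Nsq_diff m w1 w2 : Nsq m (fun i => w1 i - w2 i) = Nsq m w1 + Nsq m w2 - 2 * dot m w1 w2.
Proof.
  unfold Nsq, dot. rewrite <- sumR_scal, <- sumR_plus, <- sumR_minus.
  apply sumR_ext; intros; ring.
Qed.

Lemma dot_le m w1 w2 : dot m w1 w2 <= norm2 m w1 * norm2 m w2.
Proof.
  pose proof (norm2_nonneg m w1). pose proof (norm2_nonneg m w2).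
  assert (Rabs (dot m w1 w2) <= norm2 m w1 * norm2 m w2).
  { apply abs_le_sq; [apply Rmult_le_pos; auto|].
    replace (norm2 m w1 * norm2 m w2 * (norm2 m w1 * norm2 m w2)) with
      ((norm2 m w1 * norm2 m w1) * (norm2 m w2 * norm2 m w2)) by ring.
    rewrite !norm2_sq'. apply cauchy_schwarz. }
  pose proof (Rle_abs (dot m w1 w2)). lra.
Qed.

Lemma rho_diff m w1 w2 :
  Rabs (norm2 m w1 - norm2 m w2) <= norm2 m (fun i => w1 i - w2 i).
Proof.
  apply abs_le_sq; [apply norm2_nonneg|]. rewrite norm2_sq', Nsq_diff.
  pose proof (dot_le m w1 w2). rewrite <- !norm2_sq'. nra.
Qed.

Lemma u_bound m w1 w2 r : 0 < r -> r <= norm2 m w1 -> r <= norm2 m w2 ->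
  norm2 m (fun i => w1 i / norm2 m w1 - w2 i / norm2 m w2) <= norm2 m (fun i => w1 i - w2 i) / r.
Proof.
  intros Hr H1 H2. set (r1 := norm2 m w1) in *. set (r2 := norm2 m w2) in *.
  set (d := norm2 m (fun i => w1 i - w2 i)).
  assert (Hd : 0 <= d) by apply norm2_nonneg.
  change (sqrt (Nsq m (fun i => w1 i / r1 - w2 i / r2)) <= d / r). apply sqrt_sq_le; [apply Nsq_nonneg|unfold Rdiv; apply Rmult_le_pos; [lra|left; apply Rinv_0_lt_compat; lra]|].
  assert (E : Nsq m (fun i => w1 i / r1 - w2 i / r2) = Nsq m w1 / (r1 * r1) + Nsq m w2 / (r2 * r2) - 2 * dot m w1 w2 / (r1 * r2)).
  { unfold Nsq, dot. unfold Rdiv. rewrite <- !sumR_scalr, <- sumR_scal, <- sumR_scalr, <- sumR_plus, <- sumR_minus.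
    apply sumR_ext; intros; field; lra. }
  rewrite E. unfold r1, r2. rewrite <- !norm2_sq'. fold r1 r2.
  assert (Hdd : d * d = r1 * r1 + r2 * r2 - 2 * dot m w1 w2).
  { unfold d. rewrite norm2_sq', Nsq_diff. unfold r1, r2. rewrite !norm2_sq'. ring. }
  pose proof (dot_le m w1 w2). fold r1 r2 in H.
  replace (r1 * r1 / (r1 * r1) + r2 * r2 / (r2 * r2) - 2 * dot m w1 w2 / (r1 * r2))
    with ((2 * (r1 * r2) - 2 * dot m w1 w2) / (r1 * r2)) by (field; lra).
  assert (Hn : 0 <= 2 * (r1 * r2) - 2 * dot m w1 w2 <= d * d).
  { split; [lra|]. rewrite Hdd. pose proof (sq_nn (r1 - r2)). nra. }
  assert (Hrr : r * r <= r1 * r2) by nra.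
  replace (d / r * (d / r)) with (d * d / (r * r)) by (field; lra).
  apply Rle_trans with (d * d / (r1 * r2)).
  - unfold Rdiv. apply Rmult_le_compat_r; [left; apply Rinv_0_lt_compat; nra|lra].
  - unfold Rdiv. apply Rmult_le_compat_l; [apply sq_nn|]. apply Rinv_le_contravar; nra.
Qed.


Lemma abs_mul_le x y A B : Rabs x <= A -> Rabs y <= B -> Rabs (x * y) <= A * B.
Proof.
  intros. rewrite Rabs_mult. apply Rmult_le_compat; auto using Rabs_pos.
Qed.

Lemma term_bound mu z1 z2 C1 C2 xm s1 s2 M Z K a d :
  0 < mu -> 0 < s1 -> 0 < s2 -> 0 <= M -> 0 <= Z -> 0 <= d -> 0 <= a ->
  Rabs (z1 - z2) <= Z * M * d -> Rabs C1 <= Z * M -> Rabs C2 <= Z * M ->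
  Rabs (C1 - C2) <= K * d -> Rabs xm <= M -> / s1 ^ 3 <= a ^ 3 ->
  Rabs (/ s1 ^ 3 - / s2 ^ 3) <= 3 * a ^ 5 * d ->
  Rabs (((1 - th (z1 / mu) ^ 2) / mu * C1 ^ 2 - th (z1 / mu) * xm / s1 ^ 3)
      - ((1 - th (z2 / mu) ^ 2) / mu * C2 ^ 2 - th (z2 / mu) * xm / s2 ^ 3))
  <= d * (Z ^ 3 * M ^ 3 / mu ^ 2 + 2 * Z * M * K / mu + Z * M ^ 2 * a ^ 3 / mu + 3 * a ^ 5 * M).
Proof.
  intros Hmu Hs1 Hs2 HM HZ Hd Ha Hz HC1 HC2 HC Hxm Hi3 Hi3d.
  set (t1 := th (z1 / mu)). set (t2 := th (z2 / mu)).
  pose proof (th_bound (z1 / mu)) as Ht1. pose proof (th_bound (z2 / mu)) as Ht2. fold t1 t2 in Ht1, Ht2.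
  assert (Hdz : Rabs (z1 / mu - z2 / mu) <= Z * M * d / mu).
  { replace (z1 / mu - z2 / mu) with ((z1 - z2) * / mu) by (field; lra).
    rewrite Rabs_mult, (Rabs_right (/ mu)) by (apply Rle_ge; left; apply Rinv_0_lt_compat; auto).
    unfold Rdiv. apply Rmult_le_compat_r; [left; apply Rinv_0_lt_compat; auto|auto]. }
  assert (E1 : Rabs (t2 ^ 2 - t1 ^ 2) <= Z * M * d / mu).
  { rewrite Rabs_minus_sym. eapply Rle_trans; [apply th2_lip|auto]. }
  assert (E2 : Rabs (t1 - t2) <= Z * M * d / mu).
  { eapply Rle_trans; [apply th_lip|auto]. }
  assert (HC1s : Rabs (C1 ^ 2) <= Z * M * (Z * M)).
  { replace (C1 ^ 2) with (C1 * C1) by ring. apply abs_mul_le; auto. }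
  assert (HCs : Rabs (C1 ^ 2 - C2 ^ 2) <= K * d * (2 * (Z * M))).
  { replace (C1 ^ 2 - C2 ^ 2) with ((C1 - C2) * (C1 + C2)) by ring. apply abs_mul_le; auto.
    eapply Rle_trans; [apply Rabs_triang|lra]. }
  assert (Ha3 : Rabs (/ s1 ^ 3) <= a ^ 3).
  { rewrite Rabs_right; auto. apply Rle_ge. left. apply Rinv_0_lt_compat. apply pow_lt; auto. }
  assert (Hu : Rabs (1 - t2 ^ 2) <= 1) by (apply Rabs_le; nra).
  assert (Hmu' : Rabs (/ mu) <= / mu) by (rewrite Rabs_right; [lra|apply Rle_ge; left; apply Rinv_0_lt_compat; auto]).
  replace (((1 - t1 ^ 2) / mu * C1 ^ 2 - t1 * xm / s1 ^ 3) - ((1 - t2 ^ 2) / mu * C2 ^ 2 - t2 * xm / s2 ^ 3))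
    with ((t2 ^ 2 - t1 ^ 2) * / mu * C1 ^ 2 + (1 - t2 ^ 2) * / mu * (C1 ^ 2 - C2 ^ 2)
          - (t1 - t2) * xm * / s1 ^ 3 - t2 * xm * (/ s1 ^ 3 - / s2 ^ 3))
    by (field; split; try lra; apply pow_nonzero; lra).
  assert (A1 : Rabs ((t2 ^ 2 - t1 ^ 2) * / mu * C1 ^ 2) <= Z * M * d / mu * / mu * (Z * M * (Z * M))).
  { apply abs_mul_le; auto. apply abs_mul_le; auto. }
  assert (A2 : Rabs ((1 - t2 ^ 2) * / mu * (C1 ^ 2 - C2 ^ 2)) <= 1 * / mu * (K * d * (2 * (Z * M)))).
  { apply abs_mul_le; auto. apply abs_mul_le; auto. }
  assert (A3 : Rabs ((t1 - t2) * xm * / s1 ^ 3) <= Z * M * d / mu * M * a ^ 3).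
  { apply abs_mul_le; auto. apply abs_mul_le; auto. }
  assert (A4 : Rabs (t2 * xm * (/ s1 ^ 3 - / s2 ^ 3)) <= 1 * M * (3 * a ^ 5 * d)).
  { apply abs_mul_le; auto. apply abs_mul_le; auto. apply Rabs_le; lra. }
  eapply Rle_trans. { unfold Rminus at 1 2. eapply Rle_trans; [apply Rabs_triang|].
    apply Rplus_le_compat; [eapply Rle_trans; [apply Rabs_triang|]|rewrite Rabs_Ropp; apply A4].
    apply Rplus_le_compat; [eapply Rle_trans; [apply Rabs_triang|]|rewrite Rabs_Ropp; apply A3].
    apply Rplus_le_compat; [apply A1|apply A2]. }
  right. field. lra.
Qed.


Lemma inv_lt_of a s : 0 < s -> 1 < a * s -> / s < a.
Proof.
  intros Hs H. apply (Rmult_lt_reg_r s); auto. rewrite Rinv_l; lra.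
Qed.

Lemma pt_facts n w r : (2 <= n)%nat -> 0 < r -> in_Gamma n w -> r <= norm2 (n-1) w ->
  0 < norm2 (n-1) w < 1 /\ 0 < sv (n-1) w /\ 1 < 2 * sqrt (INR n) * sv (n-1) w
  /\ sv (n-1) w * sv (n-1) w + norm2 (n-1) w * norm2 (n-1) w = 1.
Proof.
  intros Hn Hr HG Hrw. unfold in_Gamma in HG.
  set (rho := norm2 (n-1) w) in *. assert (Hr0 : 0 <= rho) by apply norm2_nonneg.
  assert (Hn2 : 2 <= INR n) by (replace 2 with (INR 2) by (simpl; lra); apply le_INR; auto).
  set (q := (4 * INR n - 1) / (4 * INR n)) in *.
  assert (Hq : 0 <= q < 1).
  { unfold q. split.
    - unfold Rdiv; apply Rmult_le_pos; [lra|left; apply Rinv_0_lt_compat; lra].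
    - apply (Rmult_lt_reg_r (4 * INR n)); [lra|]. unfold Rdiv. rewrite Rmult_assoc, Rinv_l; lra. }
  assert (Hrho2 : rho * rho < q).
  { rewrite <- (sqrt_sqrt q) by lra. pose proof (sqrt_pos q). nra. }
  assert (HN : Nsq (n-1) w = rho * rho) by (unfold rho; rewrite norm2_sq'; auto).
  assert (HN1 : Nsq (n-1) w < 1) by lra.
  pose proof (sv_pos _ _ HN1) as Hs. pose proof (sv_sq _ _ HN1) as Hs2.
  assert (Hrho1 : rho < 1) by nra.
  repeat split; try lra.
  set (s := sv (n-1) w) in *. set (t := sqrt (INR n)).
  assert (Ht : t * t = INR n) by (apply sqrt_sqrt; lra).
  assert (Htp : 0 < t) by (apply sqrt_lt_R0; lra).
  assert (Hss : s * s * (4 * INR n) > 1).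
  { rewrite Hs2, HN. assert ((1 - q) * (4 * INR n) = 1) by (unfold q; field; lra).
    assert (rho * rho * (4 * INR n) < q * (4 * INR n)) by (apply Rmult_lt_compat_r; lra). nra. }
  destruct (Rle_dec (2 * t * s) 1); [|lra].
  assert ((2 * t * s) * (2 * t * s) <= 1) by (assert (0 <= 2*t*s) by nra; nra).
  replace ((2 * t * s) * (2 * t * s)) with (s * s * (4 * (t * t))) in H by ring. rewrite Ht in H. lra.
Qed.


Lemma C_bound n p X k w a : (k < p)%nat -> (1 <= n)%nat -> 0 < norm2 (n-1) w < 1 -> 0 < sv (n-1) w ->
  / sv (n-1) w < a ->
  Rabs (Ck n X k w) <= (sqrt (INR (n-1)) + a) * max_abs n p X.
Proof.
  intros Hk Hn [Hr0 Hr1] Hs Ha. unfold Ck.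
  set (rho := norm2 (n-1) w) in *. set (s := sv (n-1) w) in *. set (M := max_abs n p X).
  pose proof (max_abs_nonneg n p X) as HM. fold M in HM.
  pose proof (dot_bound n p X k w Hk) as HD. fold rho M in HD.
  pose proof (max_abs_ge n p X (n-1) k ltac:(lia) Hk) as Hx. fold M in Hx.
  unfold Rminus. eapply Rle_trans; [apply Rabs_triang|]. rewrite Rabs_Ropp.
  assert (Hi : 0 < / rho) by (apply Rinv_0_lt_compat; auto).
  assert (Hi2 : 0 < / s) by (apply Rinv_0_lt_compat; auto).
  assert (A1 : Rabs (sumR (n - 1) (fun i => w i * X i k) / rho) <= sqrt (INR (n-1)) * M).
  { unfold Rdiv. rewrite Rabs_mult, (Rabs_right (/ rho)) by lra.
    apply (Rmult_le_reg_r rho); auto. rewrite Rmult_assoc, Rinv_l by lra. lra. }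
  assert (A2 : Rabs (rho * X (n - 1)%nat k / s) <= M * a).
  { replace (rho * X (n - 1)%nat k / s) with (X (n-1)%nat k * (rho * / s)) by (unfold Rdiv; ring).
    apply abs_mul_le; auto. rewrite Rabs_right by (apply Rle_ge; apply Rmult_le_pos; lra).
    nra. }
  lra.
Qed.

Lemma Cdiff_bound n p X k w1 w2 a r : (k < p)%nat -> (1 <= n)%nat -> 0 < r ->
  r <= norm2 (n-1) w1 -> r <= norm2 (n-1) w2 ->
  0 < norm2 (n-1) w1 < 1 -> 0 < norm2 (n-1) w2 < 1 -> 0 < sv (n-1) w1 -> 0 < sv (n-1) w2 ->
  1 < a * sv (n-1) w1 -> 1 < a * sv (n-1) w2 ->
  sv (n-1) w1 * sv (n-1) w1 + norm2 (n-1) w1 * norm2 (n-1) w1 = 1 ->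
  sv (n-1) w2 * sv (n-1) w2 + norm2 (n-1) w2 * norm2 (n-1) w2 = 1 ->
  Rabs (Ck n X k w1 - Ck n X k w2) <=
   (sqrt (INR (n-1)) * max_abs n p X / r + a ^ 3 * max_abs n p X) * norm2 (n-1) (fun i => w1 i - w2 i).
Proof.
  intros Hk Hn Hr H1 H2 Hp1 Hp2 Hs1 Hs2 Ha1 Ha2 Hq1 Hq2. unfold Ck.
  set (r1 := norm2 (n-1) w1) in *. set (r2 := norm2 (n-1) w2) in *.
  set (d := norm2 (n-1) (fun i => w1 i - w2 i)).
  set (M := max_abs n p X).
  pose proof (max_abs_nonneg n p X) as HM. fold M in HM.
  pose proof (max_abs_ge n p X (n-1) k ltac:(lia) Hk) as Hx. fold M in Hx.
  pose proof (rho_diff (n-1) w1 w2) as Hrd. fold r1 r2 d in Hrd.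
  assert (Hd : 0 <= d) by apply norm2_nonneg.
  assert (E : sumR (n - 1) (fun i => w1 i * X i k) / r1 - r1 * X (n - 1)%nat k / sv (n - 1) w1 -
    (sumR (n - 1) (fun i => w2 i * X i k) / r2 - r2 * X (n - 1)%nat k / sv (n - 1) w2)
    = sumR (n-1) (fun i => (w1 i / r1 - w2 i / r2) * X i k) - X (n-1)%nat k * (r1 / sv (n-1) w1 - r2 / sv (n-1) w2)).
  { rewrite (sumR_ext (n-1) (fun i => (w1 i / r1 - w2 i / r2) * X i k)
        (fun i => / r1 * (w1 i * X i k) - / r2 * (w2 i * X i k))) by (intros; field; lra).
    rewrite sumR_minus, !sumR_scal. field. lra. }
  rewrite E. unfold Rminus at 1. eapply Rle_trans; [apply Rabs_triang|]. rewrite Rabs_Ropp.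
  pose proof (dot_bound n p X k (fun i => w1 i / r1 - w2 i / r2) Hk) as HD. fold M in HD.
  pose proof (u_bound (n-1) w1 w2 r Hr H1 H2) as HU. fold r1 r2 d in HU.
  assert (A1 : Rabs (sumR (n-1) (fun i => (w1 i / r1 - w2 i / r2) * X i k)) <= d / r * (sqrt (INR (n-1)) * M)).
  { eapply Rle_trans; [exact HD|]. apply Rmult_le_compat_r; auto.
    apply Rmult_le_pos; [apply sqrt_pos|auto]. }
  assert (A2 : Rabs (X (n-1)%nat k * (r1 / sv (n-1) w1 - r2 / sv (n-1) w2)) <= M * (a ^ 3 * d)).
  { apply abs_mul_le; auto. apply G2; auto; lra. }
  assert (E2 : (sqrt (INR (n - 1)) * M / r + a ^ 3 * M) * d = d / r * (sqrt (INR (n-1)) * M) + M * (a ^ 3 * d)) by (field; lra).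
  rewrite E2. lra.
Qed.


Lemma coef_bounds n : (2 <= n)%nat ->
  let t := sqrt (INR n) in let sm := sqrt (INR (n-1)) in
  0 <= sm <= t /\ sm + 2 * t <= 2 * (t * t) /\ t * t = INR n /\ 2 <= t * t /\ 0 < t.
Proof.
  intros Hn t sm.
  assert (Hn2 : 2 <= INR n) by (replace 2 with (INR 2) by (simpl; lra); apply le_INR; auto).
  assert (Ht : t * t = INR n) by (apply sqrt_sqrt; lra).
  assert (Htp : 0 < t) by (apply sqrt_lt_R0; lra).
  assert (Hsm : 0 <= sm <= t) by (split; [apply sqrt_pos|apply sqrt_le_1_alt, le_INR; lia]).
  repeat split; try lra.
  destruct (Nat.eq_dec n 2) as [->|Hne].
  - assert (sm = 1) by (unfold sm; simpl; rewrite sqrt_1; reflexivity).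
    simpl in Ht. nra.
  - assert (Hn3 : 3 <= INR n) by (replace 3 with (INR 3) by (simpl; lra); apply le_INR; lia).
    assert (1.5 <= t) by nra. nra.
Qed.


Theorem mainTheorem11 (n p : nat) (mu r : R) (X0 : nat -> nat -> R) :
  0 < mu -> 0 < r < 1 ->
  forall w1 w2 : vec,
    in_Gamma n w1 -> r <= norm2 (n - 1) w1 ->
    in_Gamma n w2 -> r <= norm2 (n - 1) w2 ->
    Rabs (hess_quad (n - 1) (g_obj mu n p X0) w1 / norm2 (n - 1) w1 ^ 2
          - hess_quad (n - 1) (g_obj mu n p X0) w2 / norm2 (n - 1) w2 ^ 2)
    <= (16 * INR n ^ 3 / mu ^ 2 * max_abs n p X0 ^ 3
        + 8 * sqrt (INR n) ^ 3 / (mu * r) * max_abs n p X0 ^ 2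
        + 48 * sqrt (INR n) ^ 5 / mu * max_abs n p X0 ^ 2
        + 96 * sqrt (INR n) ^ 5 * max_abs n p X0)
       * norm2 (n - 1) (fun i => w1 i - w2 i).
Proof.
  intros Hmu [Hr0 Hr1] w1 w2 HG1 HR1 HG2 HR2.
  assert (Hn : (2 <= n)%nat).
  { destruct (Nat.le_gt_cases 2 n) as [H|H]; auto.
    exfalso. assert (E : (n - 1 = 0)%nat) by lia. rewrite E in HR1. unfold norm2 in HR1.
    rewrite sumR_0, sqrt_0 in HR1. lra. }
  destruct (pt_facts n w1 r Hn Hr0 HG1 HR1) as [[Hp1 Hq1] [Hs1 [Ha1 Hss1]]].
  destruct (pt_facts n w2 r Hn Hr0 HG2 HR2) as [[Hp2 Hq2] [Hs2 [Ha2 Hss2]]].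
  rewrite (hess_formula mu n p X0 w1), (hess_formula mu n p X0 w2); auto;
    try (rewrite <- norm2_sq'; nra).
  unfold Phi. rewrite <- Rmult_minus_distr_l, <- sumR_minus.
  destruct (coef_bounds n Hn) as [Hsm [HZ [Ht [Ht2 Htp]]]].
  set (t := sqrt (INR n)) in *. set (sm := sqrt (INR (n-1))) in *.
  set (d := norm2 (n - 1) (fun i => w1 i - w2 i)).
  set (M := max_abs n p X0).
  set (a := 2 * t).
  set (Z := sm + a). set (K := sm * M / r + a ^ 3 * M).
  assert (HM : 0 <= M) by apply max_abs_nonneg.
  assert (Hd : 0 <= d) by apply norm2_nonneg.
  assert (Ha : 0 <= a) by (unfold a; lra).
  assert (Ha1' : 1 < a * sv (n-1) w1) by (unfold a; lra).
  assert (Ha2' : 1 < a * sv (n-1) w2) by (unfold a; lra).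
  set (Lb := Z ^ 3 * M ^ 3 / mu ^ 2 + 2 * Z * M * K / mu + Z * M ^ 2 * a ^ 3 / mu + 3 * a ^ 5 * M).
  assert (Hk : forall k, (k < p)%nat -> Rabs (Tk mu n X0 k w1 - Tk mu n X0 k w2) <= d * Lb).
  { intros k Hk. unfold Tk, Lb.
    pose proof (rho_diff (n-1) w1 w2) as Hrd. fold d in Hrd.
    assert (Hsd : Rabs (sv (n-1) w1 - sv (n-1) w2) <= a * d) by (apply (G1 a d (norm2 (n-1) w1) (norm2 (n-1) w2)); auto; lra).
    pose proof (max_abs_ge n p X0 (n-1) k ltac:(lia) Hk) as Hx. fold M in Hx.
    apply term_bound; auto.
    - unfold Z; lra.
    - assert (EZ : Zk n X0 k w1 - Zk n X0 k w2 = sumR (n-1) (fun i => (w1 i - w2 i) * X0 i k)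
                 + (sv (n-1) w1 - sv (n-1) w2) * X0 (n-1)%nat k).
      { unfold Zk. rewrite (sumR_ext (n-1) (fun i => (w1 i - w2 i) * X0 i k)
           (fun i => w1 i * X0 i k - w2 i * X0 i k)) by (intros; ring). rewrite sumR_minus. ring. }
      rewrite EZ. eapply Rle_trans; [apply Rabs_triang|].
      pose proof (dot_bound n p X0 k (fun i => w1 i - w2 i) Hk) as HD. fold d M sm in HD.
      assert (Rabs ((sv (n - 1) w1 - sv (n - 1) w2) * X0 (n - 1)%nat k) <= a * d * M) by (apply abs_mul_le; auto).
      unfold Z. lra.
    - apply C_bound; auto; try lia. apply inv_lt_of; auto.
    - apply C_bound; auto; try lia. apply inv_lt_of; auto.
    - unfold K, d, M, sm. apply Cdiff_bound; auto; lia.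
    - rewrite <- pow_inv. apply pow_incr. split; [left; apply Rinv_0_lt_compat; auto|].
      left. apply inv_lt_of; auto.
    - apply G3; auto. }
  assert (HLb : 0 <= Lb).
  { assert (0 <= K) by (unfold K, Rdiv; apply Rplus_le_le_0_compat; repeat apply Rmult_le_pos; try apply pow_le; try lra; left; apply Rinv_0_lt_compat; lra).
    unfold Lb, Z.
    assert (0 <= sm + a) by lra.
    assert (0 < / mu) by (apply Rinv_0_lt_compat; auto).
    assert (0 < / r) by (apply Rinv_0_lt_compat; auto).
    unfold Rdiv. repeat apply Rplus_le_le_0_compat; repeat apply Rmult_le_pos; try apply pow_le; try lra; left; apply Rinv_0_lt_compat; try apply pow_lt; lra. }
  assert (Hbound : Rabs (/ INR p * sumR p (fun k => Tk mu n X0 k w1 - Tk mu n X0 k w2)) <= d * Lb).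
  { destruct p as [|p'].
    - rewrite sumR_0, Rmult_0_r, Rabs_R0. apply Rmult_le_pos; auto.
    - assert (Hp : 0 < INR (S p')) by (apply lt_0_INR; lia).
      rewrite Rabs_mult, Rabs_right by (apply Rle_ge; left; apply Rinv_0_lt_compat; auto).
      apply Rle_trans with (/ INR (S p') * (INR (S p') * (d * Lb))).
      + apply Rmult_le_compat_l; [left; apply Rinv_0_lt_compat; auto|].
        eapply Rle_trans; [apply sumR_abs|]. rewrite <- sumR_const. apply sumR_le. auto.
      + right. field. lra. }
  eapply Rle_trans; [exact Hbound|]. rewrite (Rmult_comm _ d). apply Rmult_le_compat_l; auto.
  assert (0 < / mu) by (apply Rinv_0_lt_compat; auto).
  assert (0 < / r) by (apply Rinv_0_lt_compat; auto).
  assert (HF1 : 0 <= M ^ 3 / mu ^ 2) by (unfold Rdiv; apply Rmult_le_pos; [apply pow_le; auto|left; apply Rinv_0_lt_compat; apply pow_lt; auto]).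
  assert (HF2 : 0 <= M ^ 2 / (mu * r)) by (unfold Rdiv; apply Rmult_le_pos; [apply pow_le; auto|left; apply Rinv_0_lt_compat; nra]).
  assert (HF3 : 0 <= M ^ 2 / mu) by (unfold Rdiv; apply Rmult_le_pos; [apply pow_le; auto|lra]).
  assert (EL : Lb = Z ^ 3 * (M ^ 3 / mu ^ 2) + (2 * Z * sm) * (M ^ 2 / (mu * r)) + (3 * Z * a ^ 3) * (M ^ 2 / mu) + 3 * a ^ 5 * M)
    by (unfold Lb, K; field; lra).
  apply Rle_trans with ((16 * (t * t) ^ 3) * (M ^ 3 / mu ^ 2) + (8 * t ^ 3) * (M ^ 2 / (mu * r)) + (48 * t ^ 5) * (M ^ 2 / mu) + (96 * t ^ 5) * M).
  2:{ right. rewrite <- Ht. field. lra. }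
  rewrite EL.
  assert (HZ0 : 0 <= Z) by (unfold Z; lra).
  assert (HZ2 : Z <= 2 * (t * t)) by (unfold Z, a; lra).
  assert (c1 : Z ^ 3 <= 16 * (t * t) ^ 3).
  { apply Rle_trans with ((2 * (t * t)) ^ 3); [apply pow_incr; lra|].
    assert (0 <= (t * t) ^ 3) by (apply pow_le; nra). simpl. nra. }
  assert (c2 : 2 * Z * sm <= 8 * t ^ 3).
  { assert (Z * sm <= 2 * (t * t) * t) by (apply Rmult_le_compat; lra). simpl. nra. }
  assert (c3 : 3 * Z * a ^ 3 <= 48 * t ^ 5).
  { unfold a. assert (0 <= t ^ 3) by (apply pow_le; lra).
    replace (3 * Z * (2 * t) ^ 3) with (24 * t ^ 3 * Z) by ring.
    replace (48 * t ^ 5) with (24 * t ^ 3 * (2 * (t * t))) by ring.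
    apply Rmult_le_compat_l; lra. }
  assert (c4 : 3 * a ^ 5 = 96 * t ^ 5) by (unfold a; ring).
  rewrite c4.
  apply Rplus_le_compat; [apply Rplus_le_compat; [apply Rplus_le_compat|]|]; try lra;
    apply Rmult_le_compat_r; auto.
Qed.
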